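(* Let $k$, $c$ and $n$ be positive integers and let $F=(V,E)$ be a $(2,3)$-graph on at least $5^{k-1}cn$ vertices. If $F$ contains no $(2,3)$-path with $n$ vertices, then there exist pairwise disjoint sets $V_1,\dots,V_k\subseteq V$, each of size at least $cn$, such that no edge of $E$ is a transversal with respect to $V_1,\dots,V_k$, and there is no $3$-edge $uv(w)\in E$ with $u\in V_1\cup\dots\cup V_{k-1}$ and $v,w\in V_k$.
   Context: A $(2,3)$-graph $F=(V,E)$ consists of a vertex set $V$ and a set $E$ of $2$-edges, which are unordered pairs $uv=\{u,v\}$ of distinct vertices, and $3$-edges, written $uv(w)=(\{u,v\},w)$, consisting of an unordered pair $\{u,v\}$ together with a third vertex $w$, where $u,v,w$ are distinct. A sequence of distinct vertices $(x_1,\dots,x_m)$ is a $(2,3)$-path with $m$ vertices in $F$ if for every $i=1,\dots,m-1$ either $x_ix_{i+1}\in E$ or $x_ix_{i+1}(w_i)\in E$ for some $w_i\in V\setminus\{x_1,\dots,x_m\}$, where all these vertices $w_i$ are distinct. Given pairwise disjoint sets $V_1,\dots,V_k$, a $2$-edge $uv$ is a transversal (with respect to $V_1,\dots,V_k$) if $u$ and $v$ lie in two different sets $V_i$, and a $3$-edge $uv(w)$ is a transversal if $u$, $v$ and $w$ lie in three pairwise different sets $V_i$. *)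

(* Defs.v *)
From mathcomp Require Import all_boot.
Set Implicit Arguments. Unset Strict Implicit. Unset Printing Implicit Defensive.

(* A (2,3)-graph on the finite vertex type T.
   2-edges are unordered pairs {u,v} (sets of size 2);
   3-edges uv(w) are pairs ({u,v}, w) with {u,v} of size 2 and w not in {u,v}. *)
Record graph23 (T : finType) := Graph23 {
  edges2 : {set {set T}};
  edges3 : {set ({set T} * T)}
}.

Definition wf_graph23 (T : finType) (F : graph23 T) : Prop :=
  (forall e, e \in edges2 F -> #|e| = 2) /\
  (forall p w, (p, w) \in edges3 F -> #|p| = 2 /\ w \notin p).

Definition is_edge2 (T : finType) (F : graph23 T) (u v : T) : bool :=
  (u != v) && ([set u; v] \in edges2 F).

Definition is_edge3 (T : finType) (F : graph23 T) (u v w : T) : bool :=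
  [&& u != v, u != w, v != w & ([set u; v], w) \in edges3 F].

(* s = (x_1,...,x_m) is a (2,3)-path in F: distinct vertices, and for each
   consecutive pair either a 2-edge, or a 3-edge with third vertex w_i outside
   the path; the chosen w_i are pairwise distinct.  ws records, for each i,
   None (2-edge used) or Some w_i (3-edge used). *)
Definition is_path23 (T : finType) (F : graph23 T) (s : seq T) : Prop :=
  uniq s /\
  exists ws : seq (option T),
    size ws = (size s).-1 /\
    uniq (pmap id ws) /\
    forall x0 : T, forall i, i < (size s).-1 ->
      match nth None ws i with
      | None => is_edge2 F (nth x0 s i) (nth x0 s i.+1)
      | Some w => is_edge3 F (nth x0 s i) (nth x0 s i.+1) w && (w \notin s)
      end.

(* Main.v *)
Require Import Defs.
From mathcomp Require Import all_boot.
From mathcomp Require Import zify.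
Set Implicit Arguments. Unset Strict Implicit. Unset Printing Implicit Defensive.

Lemma cardU_le (T : finType) (A B : {set T}) : #|A :|: B| <= #|A| + #|B|.
Proof. by rewrite leq_card_setU. Qed.

Lemma card_diff (T : finType) (A B : {set T}) : #|A| <= #|A :\: B| + #|B|.
Proof.
apply: leq_trans (cardU_le _ _); apply: subset_leq_card.
by apply/subsetP=> x xA; rewrite !inE xA; case: (x \in B).
Qed.

Lemma is_edge2C (T : finType) (F : graph23 T) u v : is_edge2 F u v = is_edge2 F v u.
Proof. by rewrite /is_edge2 eq_sym setUC. Qed.

Lemma is_edge3C (T : finType) (F : graph23 T) u v w : is_edge3 F u v w = is_edge3 F v u w.
Proof.
rewrite /is_edge3 [[set v; u]]setUC [v == u]eq_sym.
by case: (u != v); case: (u != w); case: (v != w).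
Qed.

Definition path_ok (T : finType) (F : graph23 T) (s : seq T) (ws : seq (option T)) : Prop :=
  uniq s /\ size ws = (size s).-1 /\ uniq (pmap id ws) /\
  forall x0 : T, forall i, i < (size s).-1 ->
      match nth None ws i with
      | None => is_edge2 F (nth x0 s i) (nth x0 s i.+1)
      | Some w => is_edge3 F (nth x0 s i) (nth x0 s i.+1) w && (w \notin s)
      end.

Lemma path_ok_is (T : finType) (F : graph23 T) s ws : path_ok F s ws -> is_path23 F s.
Proof. by case=> h1 [h2 [h3 h4]]; split=> //; exists ws. Qed.

Lemma mem_pmap_id (T : eqType) (ws : seq (option T)) w : (w \in pmap id ws) = (Some w \in ws).
Proof. by rewrite mem_pmap map_id. Qed.

Lemma path_ok_wit (T : finType) (F : graph23 T) s ws w :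
  path_ok F s ws -> w \in pmap id ws -> w \notin s.
Proof.
case=> _ [hs [_ h]]; rewrite mem_pmap_id => wi.
have := h w (index (Some w) ws); rewrite nth_index // -hs index_mem => /(_ wi).
by case/andP.
Qed.

Lemma path_ok_push (T : finType) (F : graph23 T) (u x : T) s ws o :
  path_ok F (x :: s) ws -> u \notin x :: s -> u \notin pmap id ws ->
  (match o with None => is_edge2 F u x
   | Some w => [&& is_edge3 F u x w, w \notin u :: x :: s & w \notin pmap id ws] end) ->
  path_ok F (u :: x :: s) (o :: ws).
Proof.
move=> P; case: (P) => h1 [h2 [h3 h4]] ux uw ho.
split; first by rewrite cons_uniq ux.
split; first by rewrite /= h2.
split.
  case: o ho => [w|] /=; last by [].
  by case/and3P=> _ _ ->.
move=> x0 [|i] /= hi.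
  by case: o ho => [w|] // /and3P [-> -> _].
have hi' : i < (size (x :: s)).-1 by [].
have := h4 x0 i hi'.
case E: (nth None ws i) => [w|] //= /andP [-> wn] /=.
rewrite inE negb_or wn andbT.
apply/eqP=> ew; subst w; move: uw; rewrite mem_pmap_id -E mem_nth //.
by rewrite h2.
Qed.

Lemma path_ok_pop (T : finType) (F : graph23 T) (x : T) s ws :
  path_ok F (x :: s) ws -> path_ok F s (behead ws).
Proof.
case=> h1 [h2 [h3 h4]].
split; first by case/andP: h1.
split; first by rewrite size_behead h2.
split.
  case: ws h2 h3 h4 => [|o ws] //= _.
  by case: o => [w|] //= /andP [].
move=> x0 i hi.
have hi' : i.+1 < (size (x :: s)).-1 by move: hi => /=; case: (size s) => //.
have := h4 x0 i.+1 hi'; rewrite nth_behead /=.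
case: (nth None ws i.+1) => [w|] // /andP [-> ]. 
by rewrite inE negb_or => /andP [].
Qed.

Definition used (T : finType) (s : seq T) (ws : seq (option T)) (S R : {set T}) : {set T} :=
  [set x in s] :|: [set x in pmap id ws] :|: S :|: R.

Definition oset (T : finType) (o : option T) : {set T} := if o is Some w then [set w] else set0.

Record good (T : finType) (F : graph23 T) (n : nat) (W O : {set T})
  (s : seq T) (ws : seq (option T)) (S R : {set T}) : Prop := Good {
  g_path : path_ok F s ws;
  g_size : size s < n;
  g_sW : {subset s <= W};
  g_SW : S \subset W;
  g_sS : [disjoint [set x in s] & S];
  g_RS : #|R| <= #|S|;
  g_inv : forall a u, a \in S -> u \in W :\: used s ws S R ->
     ~~ is_edge2 F a u /\
     (forall w, w \in (W :|: O) :\: used s ws S R -> ~~ is_edge3 F a u w) }.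

Lemma card_used (T : finType) s ws (S R : {set T}) :
  #|used s ws S R| <= size s + size ws + #|S| + #|R|.
Proof.
rewrite /used.
apply: leq_trans (cardU_le _ _) _; rewrite leq_add2r.
apply: leq_trans (cardU_le _ _) _; rewrite leq_add2r.
apply: leq_trans (cardU_le _ _) _; apply: leq_add.
  by rewrite cardsE card_size.
rewrite cardsE; apply: leq_trans (card_size _) _.
by rewrite size_pmap count_size.
Qed.

Lemma inv_mono (T : finType) (F : graph23 T) (W O : {set T}) s ws S R s' ws' S' R' a u :
  used s ws S R \subset used s' ws' S' R' ->
  (a \in S -> u \in W :\: used s ws S R ->
     ~~ is_edge2 F a u /\
     (forall w, w \in (W :|: O) :\: used s ws S R -> ~~ is_edge3 F a u w)) ->
  a \in S -> u \in W :\: used s' ws' S' R' ->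
     ~~ is_edge2 F a u /\
     (forall w, w \in (W :|: O) :\: used s' ws' S' R' -> ~~ is_edge3 F a u w).
Proof.
move=> /subsetP sub h aS.
rewrite in_setD => /andP [uU uW].
have uu : u \in W :\: used s ws S R.
  by rewrite in_setD uW andbT; apply: contra uU => /sub.
case: (h aS uu) => h1 h2; split=> // w; rewrite in_setD => /andP [wU wW].
by apply: h2; rewrite in_setD wW andbT; apply: contra wU => /sub.
Qed.

Definition nu (T : finType) M (S U : {set T}) := (M - #|S|) * (#|T|).+1 + #|U|.

Lemma disjP (T : finType) (A B : {set T}) :
  reflect (forall x, x \in A -> x \notin B) [disjoint A & B].
Proof.
rewrite disjoint_subset; apply: (iffP subsetP) => h x /h; by rewrite inE.
Qed.

Lemma used_push (T : finType) (u : T) s ws o (S R : {set T}) :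
  used s ws S R \subset used (u :: s) (o :: ws) S R.
Proof.
apply/subsetP => y; rewrite /used !in_setU !in_set !mem_pmap_id !in_cons.
by case: (y == u); case: (Some y == o); case: (y \in s); case: (Some y \in ws); case: (y \in S); case: (y \in R).
Qed.

Lemma used_pop (T : finType) (x : T) s ws (S R : {set T}) :
  used (x :: s) ws S R \subset used s (behead ws) (x |: S) (R :|: oset (head None ws)).
Proof.
apply/subsetP => y; case: ws => [|o ws].
  rewrite /used !inE /=.
  by case: (y == x); case: (y \in s); case: (y \in S); case: (y \in R).
rewrite /used !in_setU !in_set in_set1 !mem_pmap_id !in_cons /=.
case: o => [w|] /=; rewrite ?in_set1 ?in_set0.
  rewrite -[Some y == Some w]/(y == w).   by case: (y == x); case: (y \in s); case: (y == w); case: (Some y \in ws); case: (y \in S); case: (y \in R).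
by case: (y == x); case: (y \in s); case: (Some y \in ws); case: (y \in S); case: (y \in R).
Qed.

Lemma dfs_push (T : finType) (F : graph23 T) n (W O : {set T}) M s ws S R u ws2 :
  ~ (exists s, size s = n /\ is_path23 F s) ->
  good F n W O s ws S R -> #|S| < M ->
  u \in W :\: used s ws S R -> path_ok F (u :: s) ws2 ->
  used s ws S R \subset used (u :: s) ws2 S R ->
  exists s' ws' S' R', [/\ good F n W O s' ws' S' R', #|S'| <= M &
    nu M S' (W :\: used s' ws' S' R') < nu M S (W :\: used s ws S R)].
Proof.
move=> nop G SM uU p2 sub.
case: (G) => gp gs gsW gSW gsS gRS ginv.
 exists (u :: s), ws2, S, R; split; last first.
- rewrite /nu ltn_add2l; apply: proper_card; apply/properP; split.
    apply/subsetP => y; rewrite !in_setD => /andP [yU yW]; rewrite yW andbT.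
    by apply: contra yU => /(subsetP sub).
  exists u => //; rewrite in_setD negb_and negbK; apply/orP; left.
  by rewrite /used !inE eqxx.
- exact: ltnW.
have uW : u \in W by move: uU; rewrite in_setD => /andP [].
have uS : u \notin S.
  move: uU; rewrite in_setD => /andP [uu _]; apply: contra uu => uS.
  by rewrite /used !inE uS !orbT.
constructor => //.
- have : size (u :: s) != n.
    by apply/eqP => e; apply: nop; exists (u :: s); split => //; exact: path_ok_is p2.
  by move=> /eqP; move: gs => /=; lia.
- by move=> y; rewrite inE => /orP [/eqP -> //|]; apply: gsW.
- apply/disjP => y; rewrite inE => /orP [/eqP -> //|ys].
  by move/disjP: gsS; apply; rewrite inE.
- move=> a v aS vU; exact: (inv_mono sub (ginv a v) aS vU).
Qed.

Lemma dfs_step (T : finType) (F : graph23 T) n (W O : {set T}) M s ws S R :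
  ~ (exists s, size s = n /\ is_path23 F s) ->
  [disjoint W & O] -> 2 * M + 2 * n <= #|W| ->
  good F n W O s ws S R -> #|S| < M ->
  exists s' ws' S' R', [/\ good F n W O s' ws' S' R', #|S'| <= M &
    nu M S' (W :\: used s' ws' S' R') < nu M S (W :\: used s ws S R)].
Proof.
move=> nop dWO hW G SM.
have push := @dfs_push T F n W O M _ _ _ _ _ _ nop G SM.
case: (G) => gp gs gsW gSW gsS gRS ginv.
case: s gp gs gsW gsS ginv G push => [|x s1] gp gs gsW gsS ginv G push.
-
  have ws0 : ws = [::] by case: gp => _ [/size0nil -> _].
  subst ws.
  have : 0 < #|W :\: used [::] [::] S R|.
    have h1 := card_diff W (used [::] [::] S R).
    have h2 := card_used [::] [::] S R.
    move: h1 h2 => /=; lia.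
  rewrite card_gt0 => /set0Pn [u uU].
  apply: (push u [::] uU).
    split => //; split => //; split => //.
  apply/subsetP => y; rewrite /used !inE => /orP [/orP [/orP [] |] |] ->; by rewrite ?orbT.
-
  case: (boolP [exists u in (W :\: used (x :: s1) ws S R), is_edge2 F x u]) => [/existsP [u /andP [uU e]]|ne2].
    apply: (push u (None :: ws) uU).
      apply: path_ok_push => //.
      + move: uU; rewrite in_setD => /andP [uu _]; apply: contra uu => h.
        by rewrite /used !in_setU !in_set h.
      + move: uU; rewrite in_setD => /andP [uu _]; apply: contra uu => h.
        by rewrite /used !in_setU !in_set h !orbT.
      + by rewrite is_edge2C.
    exact: used_push.
  case: (boolP [exists u in (W :\: used (x :: s1) ws S R), [exists w in (W :|: O) :\: used (x :: s1) ws S R, is_edge3 F x u w]])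
     => [/existsP [u /andP [uU /existsP [w /andP [wP e]]]]|ne3].
    apply: (push u (Some w :: ws) uU).
      apply: path_ok_push => //.
      + move: uU; rewrite in_setD => /andP [uu _]; apply: contra uu => h.
        by rewrite /used !in_setU !in_set h.
      + move: uU; rewrite in_setD => /andP [uu _]; apply: contra uu => h.
        by rewrite /used !in_setU !in_set h !orbT.
      + rewrite is_edge3C e /=.
        move: e => /and4P [_ _ uw _].
        move: wP; rewrite in_setD /used !in_setU !in_set !negb_or => /andP [/andP [/andP [/andP [h1 h2] _] _] _].
        by rewrite eq_sym uw h1 h2.
    exact: used_push.
  have xS : x \notin S by move/disjP: gsS; apply; rewrite inE mem_head.
  have sub : used (x :: s1) ws S R \subset used s1 (behead ws) (x |: S) (R :|: oset (head None ws)).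
    exact: used_pop.
  exists s1, (behead ws), (x |: S), (R :|: oset (head None ws)); split.
  + constructor.
    * exact: path_ok_pop gp.
    * by move: gs => /=; lia.
    * by move=> y ys; apply: gsW; rewrite inE ys orbT.
    * by rewrite subUset sub1set gSW gsW // mem_head.
    * have xs1 : x \notin s1 by case: gp; rewrite cons_uniq => /andP [].
      apply/disjP => y; rewrite inE => ys; rewrite in_setU1 negb_or; apply/andP; split.
        by apply: contraTneq ys => ->.
      by move/disjP: gsS; apply; rewrite inE in_cons ys orbT.
    * apply: leq_trans (cardU_le _ _) _.
      rewrite cardsU1 xS addnC; apply: leq_add => //.
      by case: (head None ws) => [w|] /=; rewrite ?cards1 ?cards0.
    * move=> a u; rewrite in_setU1 => /orP [/eqP ->|aS]; last first.
        exact: (inv_mono sub (ginv a u) aS).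
      move=> uU.
      have uU' : u \in (W :\: used (x :: s1) ws S R).
        move: uU; rewrite !in_setD => /andP [uu ->]; rewrite andbT.
        by apply: contra uu => /(subsetP sub).
      split.
        by apply: contra ne2 => e; apply/existsP; exists u; rewrite uU'.
      move=> w wP; apply: contra ne3 => e; apply/existsP; exists u; rewrite uU'.
      apply/existsP; exists w; rewrite e andbT.
      move: wP; rewrite !in_setD => /andP [uu ->]; rewrite andbT.
      by apply: contra uu => /(subsetP sub).
  + by rewrite cardsU1 xS.
  + rewrite /nu cardsU1 xS add1n.
    have hU : #|W :\: used s1 (behead ws) (x |: S) (R :|: oset (head None ws))| <= #|T| by apply: max_card.
    have -> : M - #|S| = (M - #|S|.+1).+1 by lia.
    rewrite mulSn; lia.
Qed.

Lemma dfs_iter (T : finType) (F : graph23 T) n (W O : {set T}) M :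
  ~ (exists s, size s = n /\ is_path23 F s) ->
  [disjoint W & O] -> 2 * M + 2 * n <= #|W| ->
  forall m s ws S R, good F n W O s ws S R -> #|S| <= M ->
  nu M S (W :\: used s ws S R) < m ->
  exists s' ws' S' R', good F n W O s' ws' S' R' /\ #|S'| = M.
Proof.
move=> nop dWO hW; elim=> [|m IH] s ws S R G SM hm //.
case: (ltngtP #|S| M) => [h|h|h]; last by exists s, ws, S, R.
- have [s' [ws' [S' [R' [G' SM' hnu]]]]] := dfs_step nop dWO hW G h.
  apply: (IH s' ws' S' R' G' SM'); lia.
- lia.
Qed.

Lemma dfs (T : finType) (F : graph23 T) n (W O : {set T}) M :
  ~ (exists s, size s = n /\ is_path23 F s) -> 0 < n ->
  [disjoint W & O] -> 2 * M + 2 * n <= #|W| ->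
  exists S U L1 : {set T},
    [/\ S \subset W, U \subset W, [disjoint S & U], #|S| = M &
     [/\ #|W| <= #|U| + 2 * M + 2 * n, #|L1| <= M + n &
       forall a u, a \in S -> u \in U -> ~~ is_edge2 F a u /\
         (forall w, (w \in U) || ((w \in O) && (w \notin L1)) -> ~~ is_edge3 F a u w)]].
Proof.
move=> nop n0 dWO hW.
have G0 : good F n W O [::] [::] set0 set0.
  constructor; try by rewrite ?sub0set ?disjoints0 ?cards0.
  - by apply/disjP => y; rewrite inE.
  - by move=> a u; rewrite inE.
have c0 : #|@set0 T| <= M by rewrite cards0.
have [s [ws [S [R [G SM]]]]] :=
  dfs_iter nop dWO hW (m := (nu M set0 (W :\: used [::] [::] set0 set0)).+1) G0
   c0 (ltnSn _).
case: G => gp gs gsW gSW gsS gRS ginv.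
have hws : size ws < n by case: gp => _ [-> _]; lia.
exists S, (W :\: used s ws S R), ([set x in pmap id ws] :|: R); split => //.
- exact: subsetDl.
- apply/disjP => y yS; rewrite in_setD negb_and negbK; apply/orP; left.
  by rewrite /used !in_setU yS !orbT.
split.
- have h1 := card_diff W (used s ws S R); have h2 := card_used s ws S R; lia.
- apply: leq_trans (cardU_le _ _) _; rewrite cardsE.
  have hp : #|pmap id ws| <= size ws.
    by apply: leq_trans (card_size _) _; rewrite size_pmap count_size.
  rewrite addnC; apply: leq_add; first by rewrite -SM.
  exact: leq_trans hp (ltnW hws).
- move=> a u aS uU; have [e2 e3] := ginv a u aS uU; split=> // w hw; apply: e3.
  case/orP: hw => [|/andP [wO wL]].
    by rewrite !in_setD in_setU => /andP [-> ->].
  rewrite in_setD in_setU wO orbT andbT.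
  have wnW : w \notin W by move/disjP: dWO => h; apply: contraL wO; apply: h.
  move: wL; rewrite /used !in_setU !in_set !negb_or => /andP [-> ->]; rewrite !andbT.
  apply/andP; split.
    by apply: contra wnW; apply: gsW.
  by apply: contra wnW; apply: (subsetP gSW).
Qed.

Fixpoint gg (N n j : nat) : nat := if j is j'.+1 then N + n + 2 * gg N n j' else 0.

Definition Pgood (T : finType) (F : graph23 T) (N j : nat) (W O L : {set T}) (Vs : nat -> {set T}) : Prop :=
  [/\ (forall i, i <= j -> Vs i \subset W),
      (forall i i', i <= j -> i' <= j -> i != i' -> [disjoint Vs i & Vs i']),
      (forall i, i <= j -> N <= #|Vs i|),
      (forall u v i i', i <= j -> i' <= j -> i != i' -> u \in Vs i -> v \in Vs i' -> ~~ is_edge2 F u v) &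
      [/\ (forall u v w i i' l, i <= j -> i' <= j -> l <= j -> i != i' -> i != l -> i' != l ->
            u \in Vs i -> v \in Vs i' -> w \in Vs l -> ~~ is_edge3 F u v w),
          (forall u v w i, i < j -> u \in Vs i -> v \in Vs j -> w \in Vs j -> ~~ is_edge3 F u v w) &
          (forall u v w i i', i <= j -> i' <= j -> i != i' -> u \in Vs i -> v \in Vs i' ->
             w \in O -> w \notin L -> ~~ is_edge3 F u v w)]].

Lemma main_ind (T : finType) (F : graph23 T) n N :
  ~ (exists s, size s = n /\ is_path23 F s) -> 0 < n ->
  forall j (W O : {set T}), [disjoint W & O] -> N + 2 * gg N n j <= #|W| ->
  exists (Vs : nat -> {set T}) (L : {set T}), #|L| <= gg N n j /\ Pgood F N j W O L Vs.
Proof.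
move=> nop n0; elim=> [|j IH] W O dWO hW.
  exists (fun _ => W), set0; split; first by rewrite cards0.
  split => //.
  - by move=> i i'; rewrite !leqn0 => /eqP -> /eqP ->; rewrite eqxx.
  - by move=> i _; move: hW => /=; rewrite addn0.
  - by move=> u v i i'; rewrite !leqn0 => /eqP -> /eqP ->; rewrite eqxx.
  split => //.
  - by move=> u v w i i' l; rewrite !leqn0 => /eqP -> /eqP ->; rewrite eqxx.
  - by move=> u v w i i'; rewrite !leqn0 => /eqP -> /eqP ->; rewrite eqxx.
set M := N + gg N n j.
have hW2 : 2 * M + 2 * n <= #|W| by move: hW; rewrite /= /M; lia.
have [S [U [L1 [SW UW dSU cS [cU cL1 E]]]]] := dfs nop n0 dWO hW2.
have dUO : [disjoint U & S :|: (O :\: L1)].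
  apply/disjP => y yU; rewrite in_setU in_setD negb_or; apply/andP; split.
    by apply: contraL yU => yS; move/disjP: dSU; apply.
  rewrite negb_and; apply/orP; right.
  by move/disjP: dWO; apply; apply: (subsetP UW).
have hU : N + 2 * gg N n j <= #|U| by move: cU hW; rewrite /= /M; lia.
have [Vs [L [cL [PW Pd Pc P2 [P3 Pl PO]]]]] := IH U (S :|: (O :\: L1)) dUO hU.
have VU : forall i v, i <= j -> v \in Vs i -> v \in U by move=> i v hi /(subsetP (PW i hi)).
have inS : forall v, v \in S :\: L -> v \in S by move=> v; rewrite in_setD => /andP [].
exists (fun i => if i is i'.+1 then Vs i' else S :\: L), (L1 :|: L); split.
  apply: leq_trans (cardU_le _ _) _; move: cL1 cL; rewrite /= /M; lia.
split.
- move=> [|i] hi /=; first by apply: subset_trans (subsetDl _ _) SW.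
  exact: subset_trans (PW i hi) UW.
- move=> [|i] [|i'] hi hi' hne /=.
  + by rewrite eqxx in hne.
  + exact: disjointW (subsetDl S L) (PW i' hi') dSU.
  + by rewrite disjoint_sym; apply: disjointW (subsetDl S L) (PW i hi) dSU.
  + exact: Pd.
- move=> [|i] hi /=; last exact: Pc.
  have := card_diff S L; move: cS cL; rewrite /M; lia.
- move=> u v [|i] [|i'] hi hi' hne /= hu hv.
  + by rewrite eqxx in hne.
  + exact: (E u v (inS _ hu) (VU _ _ hi' hv)).1.
  + rewrite is_edge2C; exact: (E v u (inS _ hv) (VU _ _ hi hu)).1.
  + exact: P2 hu hv.
split.
- move=> u v w [|i] [|i'] [|l] hi hi' hl h1 h2 h3 /= hu hv hw;
    try by rewrite eqxx in h1 h2 h3.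
  + apply: (E u v (inS _ hu) (VU _ _ hi' hv)).2; by rewrite (VU _ _ hl hw).
  + rewrite is_edge3C; apply: (E v u (inS _ hv) (VU _ _ hi hu)).2; by rewrite (VU _ _ hl hw).
  + apply: (PO u v w i i') => //; first by rewrite in_setU (inS _ hw).
    by move: hw; rewrite in_setD => /andP [].
  + exact: (P3 u v w i i' l).
- move=> u v w [|i] hi /= hu hv hw.
  + apply: (E u v (inS _ hu) (VU _ _ (leqnn j) hv)).2; by rewrite (VU _ _ (leqnn j) hw).
  + exact: (Pl u v w i).
- move=> u v w [|i] [|i'] hi hi' hne /= hu hv wO wL.
  + by rewrite eqxx in hne.
  + apply: (E u v (inS _ hu) (VU _ _ hi' hv)).2.
    by move: wL; rewrite in_setU negb_or wO => /andP [-> _]; rewrite orbT.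
  + rewrite is_edge3C; apply: (E v u (inS _ hv) (VU _ _ hi hu)).2.
    by move: wL; rewrite in_setU negb_or wO => /andP [-> _]; rewrite orbT.
  + move: wL; rewrite in_setU negb_or => /andP [wL1 wL].
    apply: (PO u v w i i') => //.
    by rewrite in_setU in_setD wO wL1 orbT.
Qed.

Lemma gg_bound N n j : n <= N -> N + 2 * gg N n j <= 5 ^ j * N.
Proof.
move=> hn; elim: j => [|j IH] /=; first by rewrite expn0 mul1n addn0.
have h : N <= 5 ^ j * N by rewrite leq_pmull // expn_gt0.
rewrite expnS -mulnA; lia.
Qed.

Unset Implicit Arguments.

Theorem lemma3p2 (k c n : nat) (T : finType) (F : graph23 T) :
  0 < k -> 0 < c -> 0 < n ->
  wf_graph23 F ->
  5 ^ (k - 1) * c * n <= #|T| ->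
  ~ (exists s : seq T, size s = n /\ is_path23 F s) ->
  exists Vs : nat -> {set T},
    [/\ (forall i j, i < k -> j < k -> i != j -> [disjoint Vs i & Vs j]),
        (forall i, i < k -> c * n <= #|Vs i|),
        (forall u v i j, i < k -> j < k -> i != j ->
            u \in Vs i -> v \in Vs j -> ~~ is_edge2 F u v),
        (forall u v w i j l, i < k -> j < k -> l < k ->
            i != j -> i != l -> j != l ->
            u \in Vs i -> v \in Vs j -> w \in Vs l -> ~~ is_edge3 F u v w)
      & (forall u v w i, i < k.-1 ->
            u \in Vs i -> v \in Vs k.-1 -> w \in Vs k.-1 -> ~~ is_edge3 F u v w)].
Proof.
move=> k0 c0 n0 _ hT nop.
case: k k0 hT => // j _ hT.
have hnN : n <= c * n by rewrite leq_pmull.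
have d0 : [disjoint [set: T] & set0] by apply/disjP => y _; rewrite inE.
have hb : c * n + 2 * gg (c * n) n j <= #|[set: T]|.
  rewrite cardsT; apply: leq_trans (gg_bound j hnN) _.
  by move: hT; rewrite subn1 /= mulnA.
have [Vs [L [_ [PW Pd Pc P2 [P3 Pl _]]]]] := main_ind nop n0 d0 hb.
exists Vs; split.
- exact: Pd.
- exact: Pc.
- exact: P2.
- exact: P3.
- exact: Pl.
Qed.
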